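(* Let $P$ be a finite poset and $R$ a consistent restriction function on $P$. Let $H_\Gamma:\Gamma(P,R)\to\mathbb{Z}$ be the map $(p,k)\mapsto k$. Then there is a bijection $\varphi:\mathrm{Inc}^R(P)\to J(\Gamma(P,R))$ such that $\varphi\circ\mathrm{IncPro}=\mathrm{TogPro}_{H_\Gamma}\circ\varphi$.
   Context: A restriction function on $P$ assigns to each $p$ a nonempty finite $R(p)\subseteq\mathbb{Z}$; $\mathrm{Inc}^R(P)$ is the set of $f:P\to\mathbb{Z}$ with $f(p)\in R(p)$ and $p_1<p_2\Rightarrow f(p_1)<f(p_2)$. $R$ is consistent if for every cover $x\lessdot y$ in $P$, $\min R(x)<\min R(y)$ and $\max R(x)<\max R(y)$. $R(p)^*=R(p)\setminus\{\max R(p)\}$; $R(p)_{>k}$ (resp. $R(p)_{<k}$) is the smallest (resp. largest) element of $R(p)$ greater (resp. less) than $k$. $\Gamma(P,R)$ is the poset on $\{(p,k):p\in P, k\in R(p)^*\}$ whose order is the reflexive–transitive closure of the relation $(p_1,k_1)\lessdot(p_2,k_2)$, holding iff either (1) $p_1=p_2$ and $R(p_1)_{>k_2}=k_1$; or (2) $p_1\lessdot p_2$ in $P$, $k_1=R(p_1)_{<k_2}$, $k_1\neq\max R(p_1)$, and no $k\in R(p_2)$ with $k>k_2$ has $R(p_1)_{<k}=k_1$. Generalized Bender–Knuth involution: for $i\in\mathbb{Z}$ and $f\in\mathrm{Inc}^R(P)$, $\rho_i(f)(p)=R(p)_{>i}$ if $f(p)=i$ and the labeling obtained from $f$ by changing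 only the value at $p$ to $R(p)_{>i}$ lies in $\mathrm{Inc}^R(P)$; $\rho_i(f)(p)=i$ if $f(p)=R(p)_{>i}$ and the labeling obtained by changing only the value at $p$ to $i$ lies in $\mathrm{Inc}^R(P)$; otherwise $\rho_i(f)(p)=f(p)$. $\mathrm{IncPro}$ applies $\rho_i$ for all $i\in\mathbb{Z}$ in increasing order of $i$ (only finitely many act nontrivially), i.e. $\mathrm{IncPro}=\cdots\circ\rho_3\circ\rho_2\circ\rho_1\circ\cdots$. For a finite poset $Q$, $J(Q)$ is its set of order ideals. For $x\in Q$ the toggle $t_x:J(Q)\to J(Q)$ sends $I$ to $I\cup\{x\}$ if $x\notin I$ and this is an order ideal, to $I\setminus\{x\}$ if $x\in I$ and this is an order ideal, and to $I$ otherwise. For $H:Q\to\mathbb{Z}$ with $H(x)\ne H(y)$ whenever $x\lessdot y$ (a toggle order), $T_H^i$ is the product of the (pairwise commuting) toggles $t_x$ with $H(x)=i$, and $\mathrm{TogPro}_H$ applies $T_H^i$ in increasing order of $i$: $\mathrm{TogPro}_H=\cdots T_H^{2}T_H^1T_H^0T_H^{-1}T_H^{-2}\cdots$ (composition right to left). *)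

(* Defs.v *)
From HB Require Import structures.
From mathcomp Require Import all_boot all_order all_algebra.
From mathcomp Require Import finmap.
Set Implicit Arguments. Unset Strict Implicit. Unset Printing Implicit Defensive.
Import Order.TTheory GRing.Theory Num.Theory.
Local Open Scope ring_scope.

Section Defs.
Variables (d : Order.disp_t) (P : finPOrderType d).

Definition pcover (x y : P) : bool :=
  ((x < y)%O) && ~~ [exists q : P, ((x < q)%O) && ((q < y)%O)].

(** max and min of a finite set of integers (meaningful when it is nonempty) *)
Definition maxR (A : {fset int}) : int :=
  \big[Num.max/head 0 (enum_fset A)]_(x <- enum_fset A) x.
Definition minR (A : {fset int}) : int :=
  \big[Num.min/head 0 (enum_fset A)]_(x <- enum_fset A) x.

Definition succR (A : {fset int}) (k : int) : option int :=
  let s := [seq x <- enum_fset A | k < x] in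
  if s is x0 :: _ then Some (\big[Num.min/x0]_(x <- s) x) else None.
Definition predR (A : {fset int}) (k : int) : option int :=
  let s := [seq x <- enum_fset A | x < k] in
  if s is x0 :: _ then Some (\big[Num.max/x0]_(x <- s) x) else None.

Variable R : P -> {fset int}.

Definition restriction : Prop := forall p : P, R p != fset0.

Definition consistent : Prop :=
  forall x y : P, pcover x y ->
    minR (R x) < minR (R y) /\ maxR (R x) < maxR (R y).

Definition inc_lab (f : {ffun P -> int}) : bool :=
  [forall p, f p \in R p] &&
  [forall p1, forall p2, ((p1 < p2)%O) ==> (f p1 < f p2)].

Definition upd (f : {ffun P -> int}) (p : P) (v : int) : {ffun P -> int} :=
  [ffun q => if q == p then v else f q].

Definition rho (i : int) (f : {ffun P -> int}) : {ffun P -> int} :=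
  [ffun p =>
     match succR (R p) i with
     | Some j =>
         if (f p == i) && inc_lab (upd f p j) then j
         else if (f p == j) && inc_lab (upd f p i) then i
         else f p
     | None => f p
     end].

(** the integer interval [lo, hi] containing all values of all R p;
    rho_i with i outside it acts trivially on Inc^R(P) *)
Definition lo : int := \big[Num.min/0]_(p : P) minR (R p).
Definition hi : int := \big[Num.max/0]_(p : P) maxR (R p).
Definition irange : seq int := [seq lo + (n%:Z) | n <- iota 0 (absz (hi - lo)).+1].

Definition IncPro (f : {ffun P -> int}) : {ffun P -> int} :=
  foldl (fun g i => rho i g) f irange.

Definition gamma_seq : seq (P * int) :=
  flatten [seq [seq (p, k) | k <- [seq k <- enum_fset (R p) | k != maxR (R p)]]
          | p <- enum P].

Definition Gamma : finType := seq_sub gamma_seq.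

Definition gcov (x y : Gamma) : bool :=
  let: (p1, k1) := ssval x in
  let: (p2, k2) := ssval y in
  ((p1 == p2) && (succR (R p1) k2 == Some k1)) ||
  [&& pcover p1 p2, predR (R p1) k2 == Some k1, k1 != maxR (R p1) &
      ~~ has (fun k => (k2 < k) && (predR (R p1) k == Some k1)) (enum_fset (R p2))].

Definition gle (x y : Gamma) : bool := connect gcov x y.

Definition is_ideal (I : {set Gamma}) : bool :=
  [forall x, forall y, (gle x y && (y \in I)) ==> (x \in I)].

Definition toggle (x : Gamma) (I : {set Gamma}) : {set Gamma} :=
  if (x \notin I) && is_ideal (x |: I) then x |: I
  else if (x \in I) && is_ideal (I :\ x) then I :\ x
  else I.

Definition HGamma (x : Gamma) : int := (ssval x).2.

(** T^i_H: product of the (commuting) toggles t_x with H x = i *)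
Definition Tog (H : Gamma -> int) (i : int) (I : {set Gamma}) : {set Gamma} :=
  foldl (fun J x => toggle x J) I [seq x <- enum Gamma | H x == i].

(** TogPro_H: T^i_H applied in increasing order of i (T^i is the identity
    when i is not a value of H) *)
Definition TogPro (H : Gamma -> int) (I : {set Gamma}) : {set Gamma} :=
  foldl (fun J i => Tog H i J) I
        (sort (fun a b : int => a <= b) (undup [seq H x | x <- enum Gamma])).

End Defs.

(* Main.v *)
Require Import Defs.
From HB Require Import structures.
From mathcomp Require Import all_boot all_order all_algebra.
From mathcomp Require Import finmap.
From mathcomp Require Import zify.
Import Order.TTheory GRing.Theory Num.Theory.
Set Implicit Arguments. Unset Strict Implicit. Unset Printing Implicit Defensive.

Module Aux.
Local Open Scope ring_scope.

Lemma mem_bigmax (s : seq int) x0 : \big[Num.max/x0]_(x <- s) x \in x0 :: s.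
Proof.
elim: s => [|a s IH]; first by rewrite big_nil mem_head.
rewrite big_cons; set m := \big[_/_]_(_ <- _) _ in IH *.
have [->|->] : Num.max a m = a \/ Num.max a m = m by lia.
  by rewrite !inE eqxx orbT.
by move: IH; rewrite !inE => /orP[->|->]; rewrite ?orbT.
Qed.

Lemma le_bigmax (s : seq int) x0 y : y \in x0 :: s -> y <= \big[Num.max/x0]_(x <- s) x.
Proof.
elim: s => [|a s IH]; first by rewrite big_nil inE => /eqP->.
rewrite big_cons; set m := \big[_/_]_(_ <- s) _ in IH *.
rewrite !inE => /or3P[/eqP Hy|/eqP Hy|H]; try subst y.
- have := IH (mem_head _ _); lia.
- lia.
- have := IH; rewrite inE H orbT => /(_ isT); lia.
Qed.

Lemma mem_bigmin (s : seq int) x0 : \big[Num.min/x0]_(x <- s) x \in x0 :: s.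
Proof.
elim: s => [|a s IH]; first by rewrite big_nil mem_head.
rewrite big_cons; set m := \big[_/_]_(_ <- _) _ in IH *.
have [->|->] : Num.min a m = a \/ Num.min a m = m by lia.
  by rewrite !inE eqxx orbT.
by move: IH; rewrite !inE => /orP[->|->]; rewrite ?orbT.
Qed.

Lemma ge_bigmin (s : seq int) x0 y : y \in x0 :: s -> \big[Num.min/x0]_(x <- s) x <= y.
Proof.
elim: s => [|a s IH]; first by rewrite big_nil inE => /eqP->.
rewrite big_cons; set m := \big[_/_]_(_ <- s) _ in IH *.
rewrite !inE => /or3P[/eqP Hy|/eqP Hy|H]; try subst y.
- have := IH (mem_head _ _); lia.
- lia.
- have := IH; rewrite inE H orbT => /(_ isT); lia.
Qed.

Lemma memfE (A : {fset int}) x : (x \in A) = (x \in enum_fset A).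
Proof. by []. Qed.

Lemma maxR_mem (A : {fset int}) : A != fset0 -> maxR A \in A.
Proof.
rewrite /maxR memfE; case E: (enum_fset A) => [|a s].
  by move=> /fset0Pn[x]; rewrite memfE E.
move=> _ /=; have := mem_bigmax (a :: s) a; by rewrite inE => /orP[/eqP->|]; rewrite ?mem_head.
Qed.

Lemma maxR_ge (A : {fset int}) x : x \in A -> x <= maxR A.
Proof.
rewrite /maxR memfE; case E: (enum_fset A) => [|a s] //= H.
by apply: le_bigmax; rewrite inE H orbT.
Qed.

Lemma minR_mem (A : {fset int}) : A != fset0 -> minR A \in A.
Proof.
rewrite /minR memfE; case E: (enum_fset A) => [|a s].
  by move=> /fset0Pn[x]; rewrite memfE E.
move=> _ /=; have := mem_bigmin (a :: s) a; by rewrite inE => /orP[/eqP->|]; rewrite ?mem_head.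
Qed.

Lemma minR_le (A : {fset int}) x : x \in A -> minR A <= x.
Proof.
rewrite /minR memfE; case E: (enum_fset A) => [|a s] //= H.
by apply: ge_bigmin; rewrite inE H orbT.
Qed.

Lemma succR_some (A : {fset int}) k j : succR A k = Some j ->
  [/\ j \in A, k < j & forall x, x \in A -> k < x -> j <= x].
Proof.
rewrite /succR; case E: [seq x <- enum_fset A | k < x] => [|a s] //= [<-].
have hm : \big[Num.min/a]_(x <- a :: s) x \in [seq x <- enum_fset A | k < x].
  by rewrite E; move: (mem_bigmin (a::s) a); rewrite inE => /orP[/eqP->|]; rewrite ?mem_head.
have hl : forall y, y \in [seq x <- enum_fset A | k < x] -> \big[Num.min/a]_(x <- a :: s) x <= y.
  by move=> y; rewrite E => h; apply: ge_bigmin; rewrite inE h orbT.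
move: hm; rewrite mem_filter => /andP[h1 h2]; split => //.
move=> x xA kx; apply: hl; by rewrite mem_filter kx.
Qed.

Lemma succR_none (A : {fset int}) k : succR A k = None -> forall x, x \in A -> x <= k.
Proof.
rewrite /succR; case E: [seq x <- enum_fset A | k < x] => [|a s] //= _ x xA.
case: (leP x k) => // h; have : x \in [seq x <- enum_fset A | k < x] by rewrite mem_filter h.
by rewrite E.
Qed.

Lemma succR_eq (A : {fset int}) k j : j \in A -> k < j ->
  (forall x, x \in A -> k < x -> j <= x) -> succR A k = Some j.
Proof.
move=> jA kj hj; case E: (succR A k) => [j'|].
  have [h1 h2 h3] := succR_some E; have := h3 _ jA kj; have := hj _ h1 h2.
  by move=> a b; congr Some; lia.
by have := succR_none E jA; lia.
Qed.

Lemma predR_some (A : {fset int}) k j : predR A k = Some j ->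
  [/\ j \in A, j < k & forall x, x \in A -> x < k -> x <= j].
Proof.
rewrite /predR; case E: [seq x <- enum_fset A | x < k] => [|a s] //= [<-].
have hm : \big[Num.max/a]_(x <- a :: s) x \in [seq x <- enum_fset A | x < k].
  by rewrite E; move: (mem_bigmax (a::s) a); rewrite inE => /orP[/eqP->|]; rewrite ?mem_head.
have hl : forall y, y \in [seq x <- enum_fset A | x < k] -> y <= \big[Num.max/a]_(x <- a :: s) x.
  by move=> y; rewrite E => h; apply: le_bigmax; rewrite inE h orbT.
move: hm; rewrite mem_filter => /andP[h1 h2]; split => //.
move=> x xA kx; apply: hl; by rewrite mem_filter kx.
Qed.

Lemma predR_none (A : {fset int}) k : predR A k = None -> forall x, x \in A -> k <= x.
Proof.
rewrite /predR; case E: [seq x <- enum_fset A | x < k] => [|a s] //= _ x xA.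
case: (leP k x) => // h; have : x \in [seq x <- enum_fset A | x < k] by rewrite mem_filter h.
by rewrite E.
Qed.

Lemma predR_eq (A : {fset int}) k j : j \in A -> j < k ->
  (forall x, x \in A -> x < k -> x <= j) -> predR A k = Some j.
Proof.
move=> jA kj hj; case E: (predR A k) => [j'|].
  have [h1 h2 h3] := predR_some E; have := h3 _ jA kj; have := hj _ h1 h2.
  by move=> a b; congr Some; lia.
by have := predR_none E jA; lia.
Qed.

Section Main.
Variables (d : Order.disp_t) (P : finPOrderType d) (R : P -> {fset int}).
Hypothesis (HR : restriction R) (HC : consistent R).

Local Notation G := (Gamma R).

Lemma gamma_mem (p : P) (k : int) :
  ((p,k) \in gamma_seq R) = (k \in R p) && (k != maxR (R p)).
Proof.
apply/idP/idP.
  move/flattenP=> [s /mapP[q _ ->] /mapP[k' Hk' [-> ->]]].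
  by move: Hk'; rewrite mem_filter andbC.
move=> /andP[h1 h2]; apply/flattenP.
exists [seq (p, k) | k <- [seq k <- enum_fset (R p) | k != maxR (R p)]].
  by apply/mapP; exists p; rewrite ?mem_enum.
by apply: map_f; rewrite mem_filter h2.
Qed.

Lemma GvalP (x : G) : ((ssval x).2 \in R (ssval x).1) && ((ssval x).2 != maxR (R (ssval x).1)).
Proof. by case: x => [[p k] /= h]; rewrite -gamma_mem. Qed.

Definition mkG (p : P) (k : int) (h : (p,k) \in gamma_seq R) : G := SeqSub h.

Lemma mkG_val p k (h : (p,k) \in gamma_seq R) : ssval (mkG h) = (p,k).
Proof. by []. Qed.

Lemma G_inj (x y : G) : ssval x = ssval y -> x = y.
Proof. by move=> h; apply: val_inj. Qed.

Lemma gcovE (x y : G) : gcov x y =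
  ((ssval x).1 == (ssval y).1) && (succR (R (ssval x).1) (ssval y).2 == Some (ssval x).2) ||
  [&& pcover (ssval x).1 (ssval y).1, predR (R (ssval x).1) (ssval y).2 == Some (ssval x).2,
      (ssval x).2 != maxR (R (ssval x).1) &
      ~~ has (fun k => ((ssval y).2 < k) && (predR (R (ssval x).1) k == Some (ssval x).2))
         (enum_fset (R (ssval y).1))].
Proof. by rewrite /gcov; case: (ssval x) => p1 k1; case: (ssval y) => p2 k2. Qed.

Definition dclosed (I : {set G}) := forall x y, gcov x y -> y \in I -> x \in I.

Lemma idealP I : is_ideal I <-> dclosed I.
Proof.
split.
  move=> /forallP H x y hxy yI.
  by move: (H x) => /forallP /(_ y) /implyP; apply; rewrite yI andbT /gle connect1.
move=> H; apply/forallP => x; apply/forallP => y; apply/implyP => /andP[/connectP[pth Hp ->]].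
elim: pth x Hp => [|z pth IH] x //= /andP[h1 h2] hl.
exact: (H x z h1 (IH z h2 hl)).
Qed.

Lemma incP (f : {ffun P -> int}) : reflect
  ((forall p, f p \in R p) /\ (forall p1 p2, (p1 < p2)%O -> f p1 < f p2)) (inc_lab R f).
Proof.
apply: (iffP andP) => [[/forallP h1 /forallP h2]|[h1 h2]]; split.
- exact: h1.
- by move=> p1 p2 h; move: (h2 p1) => /forallP /(_ p2) /implyP; apply.
- by apply/forallP.
- by apply/forallP => p1; apply/forallP => p2; apply/implyP => h; apply: h2.
Qed.

Definition phi (f : {ffun P -> int}) : {set G} := [set x : G | f (ssval x).1 <= (ssval x).2].

Lemma phi_ideal (f : {ffun P -> int}) : inc_lab R f -> dclosed (phi f).
Proof.
move=> /incP[Hm Hl] [[p1 k1] h1] [[p2 k2] h2]; rewrite /gcov /= !inE /=.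
case/orP.
  by move=> /andP[/eqP <- /eqP /succR_some [_ h _]]; lia.
move=> /and4P[hc /eqP /predR_some [_ _ h] _ _] hf.
have hlt : f p1 < f p2 by apply: Hl; move: hc => /andP[].
by apply: h; [apply: Hm|lia].
Qed.

Lemma phi_inj (f g : {ffun P -> int}) : (forall p, f p \in R p) -> (forall p, g p \in R p) ->
  phi f = phi g -> f = g.
Proof.
move=> Hf Hg E; apply/ffunP => p.
suff H : forall f g : {ffun P -> int}, (forall p, f p \in R p) -> (forall p, g p \in R p) ->
  phi f = phi g -> f p <= g p.
  by apply/eqP; rewrite eq_le (H f g) // (H g f).
move=> {}f {}g {}Hf {}Hg {}E; case: (leP (f p) (g p)) => // h.
have hm : (p, g p) \in gamma_seq R.
  rewrite gamma_mem Hg /=; have := maxR_ge (Hf p); lia.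
have : mkG hm \in phi g by rewrite inE /=.
by rewrite -E inE /=; lia.
Qed.


Lemma fiber_up I : dclosed I -> forall (p : P) k' k (x y : G),
  ssval x = (p,k') -> ssval y = (p,k) -> k' <= k -> x \in I -> y \in I.
Proof.
move=> HI p k'.
suff H : forall n k (y x : G), (absz (k - k') <= n)%N -> ssval x = (p,k') ->
  ssval y = (p,k) -> k' <= k -> x \in I -> y \in I.
  by move=> k x y h1 h2 h3 h4; apply: (H _ k y x (leqnn _)).
elim=> [|n IH] k y x hn hx hy hk xI.
  by have -> : y = x by apply: G_inj; rewrite hx hy; congr pair; lia.
case: (eqVneq k k') => [ek|nk].
  by have -> : y = x by apply: G_inj; rewrite hx hy ek.
have /andP[k'R _] := GvalP x; rewrite hx /= in k'R.
have /andP[kR kmax] := GvalP y; rewrite hy /= in kR kmax.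
case E: (predR (R p) k) => [k''|]; last first.
  by have := predR_none E k'R; lia.
have [k''R k''k k''M] := predR_some E.
have hk'' := k''M _ k'R.
have hm : (p,k'') \in gamma_seq R.
  rewrite gamma_mem k''R /=; have := maxR_ge kR; lia.
have zI : mkG hm \in I.
  apply: (IH k'' (mkG hm) x) => //; [lia | lia].
apply: (HI y (mkG hm)) => //.
rewrite gcovE hy /= eqxx /=.
apply/orP; left; apply/eqP; apply: succR_eq => // z zR hz.
case: (leP k z) => // hz'; have := k''M _ zR hz'; lia.
Qed.

Lemma cover_chain (f : P -> int) : (forall p1 p2, pcover p1 p2 -> f p1 < f p2) ->
  forall p1 p2, (p1 < p2)%O -> f p1 < f p2.
Proof.
move=> Hc.
suff H : forall n p1 p2, (#|[set q | (p1 < q)%O && (q < p2)%O]| <= n)%N ->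
  (p1 < p2)%O -> f p1 < f p2.
  by move=> p1 p2; apply: H (leqnn _).
elim=> [|n IH] p1 p2 hn h12.
  apply: Hc; rewrite /pcover h12 /=; apply/existsP => [[q hq]].
  by move: hn; rewrite leqn0 => /eqP/cards0_eq/setP/(_ q); rewrite !inE hq.
case: (boolP [exists q, (p1 < q)%O && (q < p2)%O]); last first.
  by move=> hn'; apply: Hc; rewrite /pcover h12.
move=> /existsP[q /andP[h1q hq2]].
have A1 : ([set r | (p1 < r)%O && (r < q)%O] \proper [set q0 | (p1 < q0)%O && (q0 < p2)%O]).
  apply/properP; split.
    by apply/subsetP => r; rewrite !inE => /andP[a b]; rewrite a (lt_trans b hq2).
  by exists q; rewrite !inE ?h1q ?hq2 ?ltxx ?andbF.
have A2 : ([set r | (q < r)%O && (r < p2)%O] \proper [set q0 | (p1 < q0)%O && (q0 < p2)%O]).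
  apply/properP; split.
    by apply/subsetP => r; rewrite !inE => /andP[a b]; rewrite b (lt_trans h1q a).
  by exists q; rewrite !inE ?h1q ?hq2 ?ltxx.
have := IH p1 q; have := IH q p2.
have c1 := proper_card A1; have c2 := proper_card A2.
move=> /(_ _ hq2) h2 /(_ _ h1q) h1.
have := h1 (leq_trans c1 hn); have := h2 (leq_trans c2 hn); lia.
Qed.


Definition SI (I : {set G}) (p : P) : {fset int} :=
  [fset k in R p | (k == maxR (R p)) || [exists x in I, ssval x == (p,k)]]%fset.

Definition fI (I : {set G}) : {ffun P -> int} := [ffun p => minR (SI I p)].

Lemma SI_mem I p k : (k \in SI I p) = (k \in R p) && ((k == maxR (R p)) || [exists x in I, ssval x == (p,k)]).
Proof. by rewrite /SI !inE. Qed.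

Lemma SI_n0 I p : SI I p != fset0.
Proof.
apply/fset0Pn; exists (maxR (R p)); by rewrite SI_mem eqxx maxR_mem.
Qed.

Lemma fI_SI I p : fI I p \in SI I p.
Proof. by rewrite ffunE; apply: minR_mem; apply: SI_n0. Qed.

Lemma fI_R I p : fI I p \in R p.
Proof. by have := fI_SI I p; rewrite SI_mem => /andP[]. Qed.

Lemma fI_in I : dclosed I -> forall (x : G),
  (x \in I) = (fI I (ssval x).1 <= (ssval x).2).
Proof.
move=> HI x; have /andP[kR kM] := GvalP x.
apply/idP/idP => [xI|].
  rewrite ffunE; apply: minR_le; rewrite SI_mem kR /=; apply/orP; right.
  by apply/existsP; exists x; rewrite xI -surjective_pairing eqxx.
have := fI_SI I (ssval x).1; rewrite SI_mem => /andP[_ /orP[/eqP->|]].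
  by have := maxR_ge kR; lia.
move=> /existsP[y /andP[yI /eqP hy]] hle.
apply: (fiber_up HI hy _ hle yI); exact: surjective_pairing.
Qed.

Lemma phi_fI I : dclosed I -> phi (fI I) = I.
Proof. by move=> HI; apply/setP => x; rewrite inE fI_in. Qed.

Lemma fI_inc I : dclosed I -> inc_lab R (fI I).
Proof.
move=> HI; apply/incP; split; first exact: fI_R.
apply: cover_chain => p1 p2 hc.
have [hmin hmax] := HC hc.
have := fI_SI I p2; rewrite SI_mem => /andP[k2R /orP[/eqP->|]].
  by have := maxR_ge (fI_R I p1); lia.
move=> /existsP[y /andP[yI /eqP hy]].
set k2 := fI I p2 in k2R hy.
have hmin1 := minR_le k2R.
case E: (predR (R p1) k2) => [k1|]; last first.
  by have := predR_none E (minR_mem (HR p1)); lia.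
have [k1R k1k2 k1M] := predR_some E.
case: (eqVneq k1 (maxR (R p1))) => [ek|nk].
  by have := maxR_ge (fI_R I p1); lia.
have hm : (p1,k1) \in gamma_seq R by rewrite gamma_mem k1R nk.
suff xI : mkG hm \in I.
  by move: xI; rewrite fI_in //= => h; lia.
set T := [fset k in R p2 | (k2 < k) && (predR (R p1) k == Some k1)]%fset.
have hcov : (p1 < p2)%O by move: hc => /andP[].
case: (eqVneq T fset0) => [T0|Tn0].
  apply: (HI _ y) => //; rewrite gcovE hy /= E eqxx nk hc /=; apply/orP; right.
  apply/hasPn => k hk; apply/negP => hk'.
  have : k \in T by rewrite !inE hk' andbT; exact: hk.
  by rewrite T0 inE.
have := maxR_mem Tn0; rewrite !inE => /andP[ksR /andP[hks /eqP Eks]].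
set ks := maxR T in ksR hks Eks.
have ksM : ks != maxR (R p2).
  apply/eqP => eks; move: Eks; rewrite eks.
  rewrite (@predR_eq _ _ (maxR (R p1))) ?maxR_mem //.
    by move=> [] /eqP; rewrite eq_sym (negbTE nk).
  by move=> z zR _; apply: maxR_ge.
have hm2 : (p2,ks) \in gamma_seq R by rewrite gamma_mem ksR ksM.
have y2I : mkG hm2 \in I.
  by apply: (fiber_up HI hy _ _ yI) => //; lia.
apply: (HI _ (mkG hm2)) => //; rewrite gcovE /= Eks eqxx nk hc /=; apply/orP; right.
apply/hasPn => k hk; apply/negP => /andP[h1 h2].
have : k \in T by rewrite !inE hk h2 andbT (lt_trans hks h1).
by move/maxR_ge; rewrite -/ks => hle; have := lt_le_trans h1 hle; rewrite ltxx.
Qed.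


Lemma ideal_inc (h : {ffun P -> int}) : (forall q, h q \in R q) ->
  is_ideal (phi h) = inc_lab R h.
Proof.
move=> Hh; apply/idP/idP => [/idealP HI|hi]; last by apply/idealP; apply: phi_ideal.
have E := phi_fI HI.
have <- := phi_inj (fI_R (phi h)) Hh E.
exact: fI_inc.
Qed.

Lemma upd_same (g : {ffun P -> int}) p : upd g p (g p) = g.
Proof. by apply/ffunP => q; rewrite ffunE; case: eqP => [->|]. Qed.

Lemma upd_R (g : {ffun P -> int}) p v : (forall q, g q \in R q) -> v \in R p ->
  forall q, upd g p v q \in R q.
Proof. by move=> Hg hv q; rewrite ffunE; case: eqP => [->|]. Qed.

Lemma toggle_phi (g : {ffun P -> int}) (x : G) p i : inc_lab R g -> ssval x = (p,i) ->
  toggle x (phi g) = phi (upd g p (rho R i g p)) /\ inc_lab R (upd g p (rho R i g p)).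
Proof.
move=> gi hx; have /incP[gR gl] := gi.
have /andP[iR iM] := GvalP x; rewrite hx /= in iR iM.
have xin : (x \in phi g) = (g p <= i) by rewrite inE hx.
case Ej: (succR (R p) i) => [j|]; last first.
  by have := succR_none Ej (maxR_mem (HR p)); have := maxR_ge iR; lia.
have [jR ij jmin] := succR_some Ej.
rewrite /rho ffunE Ej.
have gpR := gR p.
have between : forall k, k \in R p -> (i < k) = (j <= k).
  by move=> k kR; apply/idP/idP => h; [apply: jmin | lia].
case: (ltgtP (g p) i) => [gpi|gpi|gpi].
- (* g p < i : cannot remove x *)
  have gpj : (g p == j) = false by apply/negbTE; apply/eqP; lia.
  have gpi' : (g p == i) = false by apply/negbTE; apply/eqP; lia.
  rewrite ?gpj ?gpi' /= upd_same; split => //.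
  rewrite /toggle xin (ltW gpi) /=.
  case Ek: (predR (R p) i) => [k|]; last by have := predR_none Ek gpR; lia.
  have [kR ki kmax] := predR_some Ek.
  have hm : (p,k) \in gamma_seq R by rewrite gamma_mem kR /=; have := maxR_ge iR; lia.
  suff -> : is_ideal (phi g :\ x) = false by [].
  apply/negP => /idealP HI.
  have : x \in phi g :\ x.
    apply: (HI x (mkG hm)).
      rewrite gcovE hx /= eqxx /=; apply/orP; left; apply/eqP.
      apply: succR_eq => // z zR hz; case: (leP i z) => // hz'; have := kmax _ zR hz'; lia.
    rewrite !inE /= (kmax _ gpR gpi) andbT.
    by apply/eqP => /(congr1 (@ssval _ _)); rewrite hx /= => -[] ek; lia.
  by rewrite !inE eqxx.
-
  have gpi' : (g p == i) = false by apply/negbTE; apply/eqP; lia.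
  rewrite ?gpi' /=.
  have hjg : j <= g p by apply: jmin.
  case: (eqVneq (g p) j) => [gpj|gpj] /=.
  + (* g p = j : add x *)
    have E : x |: phi g = phi (upd g p i).
      apply/setP => z; rewrite !inE ffunE.
      case: (eqVneq (ssval z).1 p) => [zp|zp].
        have /andP[kR _] := GvalP z; rewrite zp in kR.
        rewrite zp gpj -(between _ kR).
        case: (eqVneq z x) => [->|zx]; first by rewrite hx /= lexx.
        have : (ssval z).2 != i.
          by apply: contra zx => /eqP e; apply/eqP/G_inj; rewrite hx -zp -e -surjective_pairing.
        by rewrite /= le_eqVlt eq_sym => /negbTE->.
      have -> : (z == x) = false by apply/negbTE; apply: contra zp => /eqP->; rewrite hx.
      by [].
    rewrite /toggle xin leNgt gpi /= E ideal_inc; last by apply: upd_R.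
    case hinc: (inc_lab R (upd g p i)); first by split.
    by rewrite upd_same.
  + (* g p > j : x cannot be added *)
    rewrite upd_same; split => //.
    have hm : (p,j) \in gamma_seq R.
      rewrite gamma_mem jR /=; have := maxR_ge gpR; lia.
    rewrite /toggle xin leNgt gpi /=.
    suff -> : is_ideal (x |: phi g) = false by [].
    apply/negP => /idealP HI.
    have : mkG hm \in x |: phi g.
      apply: (HI (mkG hm) x); last by rewrite !inE eqxx.
      by rewrite gcovE hx /= eqxx Ej eqxx.
    rewrite !inE /=; case/orP => [/eqP/(congr1 (@ssval _ _))|]; rewrite ?hx /=.
      by move=> [] e; lia.
    lia.
- (* g p = i : remove x *)
  rewrite ?gpi ?eqxx /=.
  have E : phi g :\ x = phi (upd g p j).
    apply/setP => z; rewrite !inE ffunE.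
    case: (eqVneq (ssval z).1 p) => [zp|zp].
      have /andP[kR _] := GvalP z; rewrite zp in kR.
      rewrite zp gpi -(between _ kR).
      case: (eqVneq z x) => [->|zx]; first by rewrite hx /= ltxx.
      have : (ssval z).2 != i.
        by apply: contra zx => /eqP e; apply/eqP/G_inj; rewrite hx -zp -e -surjective_pairing.
      by rewrite /= lt_neqAle eq_sym => ->.
    have -> : (z == x) = false by apply/negbTE; apply: contra zp => /eqP->; rewrite hx.
    by [].
  rewrite /toggle xin gpi lexx /= E ideal_inc; last by apply: upd_R.
  case hinc: (inc_lab R (upd g p j)); first by split.
  have -> : (i == j) = false by apply/negbTE; apply/eqP; lia.
  by rewrite /= -gpi upd_same.
Qed.


Lemma upd_incP (h : {ffun P -> int}) p v : inc_lab R h ->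
  inc_lab R (upd h p v) <->
  [/\ v \in R p, (forall q, (q < p)%O -> h q < v) & (forall q, (p < q)%O -> v < h q)].
Proof.
move=> /incP[hR hl]; split.
  move=> /incP[uR ul]; split.
  - by have := uR p; rewrite ffunE eqxx.
  - move=> q qp; have := ul _ _ qp; rewrite !ffunE eqxx.
    by have -> : (q == p) = false by apply/negbTE; apply: contraTneq qp => ->; rewrite ltxx.
  - move=> q qp; have := ul _ _ qp; rewrite !ffunE eqxx.
    by have -> : (q == p) = false by apply/negbTE; apply: contraTneq qp => ->; rewrite ltxx.
move=> [vR h1 h2]; apply/incP; split; first exact: upd_R.
move=> p1 p2 h12; rewrite !ffunE.
case: (eqVneq p1 p) => [e1|n1]; case: (eqVneq p2 p) => [e2|n2].
- by move: h12; rewrite e1 e2 ltxx.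
- by apply: h2; rewrite -e1.
- by apply: h1; rewrite -e2.
- exact: hl.
Qed.

Lemma rho_moved (f : {ffun P -> int}) i q : rho R i f q <> f q ->
  (f q = i /\ i < rho R i f q) \/ (i < f q /\ rho R i f q = i /\ inc_lab R (upd f q i)).
Proof.
rewrite /rho ffunE; case Ej: (succR (R q) i) => [j|] //.
have [_ ij _] := succR_some Ej.
case: (eqVneq (f q) i) => [->|n1] /=.
  by case: (inc_lab R (upd f q j)) => /= [_|]; [left | case: (_ && _)].

case: (eqVneq (f q) j) => [->|n2] //=.
by case hc: (inc_lab R (upd f q i)) => //= _; right.
Qed.

Lemma rho_local (f h : {ffun P -> int}) i p : inc_lab R f -> inc_lab R h -> h p = f p ->
  (forall q, h q = f q \/ h q = rho R i f q) -> rho R i h p = rho R i f p.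
Proof.
move=> fi hi hp hq.
have /incP[fR fl] := fi; have /incP[hR hl] := hi.
have hmv : forall q, h q <> f q -> h q = rho R i f q /\ rho R i f q <> f q.
  by move=> q nq; case: (hq q) => // e; split => //; rewrite -e.
rewrite [LHS]ffunE [RHS]ffunE hp.
case Ej: (succR (R p) i) => [j|] //.
have [jR ij jmin] := succR_some Ej.
have e1 : (f p == i) && inc_lab R (upd h p j) = (f p == i) && inc_lab R (upd f p j).
  case: (eqVneq (f p) i) => [fpi|] //=.
  have key : forall q, (p < q)%O -> h q = f q.
    move=> q pq; case: (eqVneq (h q) (f q)) => [//|/eqP nq].
    have [_ /rho_moved [[fq _]|[_ [_ /(upd_incP _ _ fi) [_ c _]]]]] := hmv q nq.
      by have := fl _ _ pq; lia.
    by have := c _ pq; lia.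
  apply/idP/idP => [/(upd_incP _ _ hi) [a b c]|/(upd_incP _ _ fi) [a b c]];
    [apply/(upd_incP _ _ fi) | apply/(upd_incP _ _ hi)]; split => //;
    move=> q hq0; first [ by rewrite -key //; apply: c | by rewrite key //; apply: c | by rewrite -key //; apply: b | by rewrite key //; apply: b | by have := fl _ _ hq0; lia | by have := hl _ _ hq0; rewrite hp; lia ].
have e2 : (f p == j) && inc_lab R (upd h p i) = (f p == j) && inc_lab R (upd f p i).
  case: (eqVneq (f p) j) => [fpj|] //=.
  have key : forall q, (q < p)%O -> (h q < i) = (f q < i).
    move=> q qp; case: (eqVneq (h q) (f q)) => [->//|/eqP nq].
    have [e /rho_moved [[fq hh]|[hh [hh2 _]]]] := hmv q nq; rewrite e.
      by rewrite fq; apply/idP/idP; lia.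
    by rewrite hh2; apply/idP/idP; lia.
  apply/idP/idP => [/(upd_incP _ _ hi) [a b c]|/(upd_incP _ _ fi) [a b c]];
    [apply/(upd_incP _ _ fi) | apply/(upd_incP _ _ hi)]; split => //;
    move=> q hq0; first [ by rewrite -key //; apply: c | by rewrite key //; apply: c | by rewrite -key //; apply: b | by rewrite key //; apply: b | by have := fl _ _ hq0; lia | by have := hl _ _ hq0; rewrite hp; lia ].
by rewrite e1 e2.
Qed.


Lemma rho_out (f : {ffun P -> int}) i p : (forall q, f q \in R q) ->
  (p,i) \notin gamma_seq R -> rho R i f p = f p.
Proof.
move=> fR; rewrite gamma_mem negb_and => hn.
rewrite ffunE; case Ej: (succR (R p) i) => [j|] //.
have [jR ij _] := succR_some Ej.
case: (boolP (i \in R p)) => iR; last first.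
  have -> : (f p == i) = false by apply/negbTE; apply: contraNneq iR => <-.
  case: (f p == j) => //=.
  by case hc: (inc_lab R (upd f p i)) => //; move: hc => /incP[/(_ p)]; rewrite ffunE eqxx (negbTE iR).
move: hn; rewrite iR /= negbK => /eqP ei.
by have := maxR_ge jR; lia.
Qed.

Definition fstG (x : G) : P := (ssval x).1.

Lemma tog_seq (f : {ffun P -> int}) i (L : seq G) : inc_lab R f ->
  all (fun x => HGamma x == i) L -> uniq (map fstG L) ->
  forall g : {ffun P -> int}, inc_lab R g -> (forall q, g q = f q \/ g q = rho R i f q) ->
  (forall q, q \in map fstG L -> g q = f q) ->
  foldl (fun J x => toggle x J) (phi g) L =
    phi [ffun q => if q \in map fstG L then rho R i f q else g q] /\
  inc_lab R [ffun q => if q \in map fstG L then rho R i f q else g q].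
Proof.
move=> fi; elim: L => [|x L IH] /=.
  move=> _ _ g gi _ _.
  by have -> : [ffun q => if q \in [::] then rho R i f q else g q] = g by apply/ffunP => q; rewrite ffunE.
move=> /andP[/eqP hx hall] /andP[pn hu] g gi hg hf.
set p := fstG x in pn hf *.
have hxv : ssval x = (p, i) by rewrite -hx /HGamma /p /fstG -surjective_pairing.
have [Et g1i] := toggle_phi gi hxv.
have hloc : rho R i g p = rho R i f p.
  by apply: rho_local => //; apply: hf; rewrite mem_head.
rewrite Et hloc in g1i *.
have h1 : forall q, upd g p (rho R i f p) q = f q \/ upd g p (rho R i f p) q = rho R i f q.
  by move=> q; rewrite ffunE; case: eqP => [->|_]; [right | exact: hg].
have h2 : forall q, q \in map fstG L -> upd g p (rho R i f p) q = f q.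
  move=> q qL; rewrite ffunE; case: eqP => [e|_]; last by apply: hf; rewrite inE qL orbT.
  by move: pn; rewrite -e qL.
have [E1 E2] := IH hall hu _ g1i h1 h2.
set F1 := [ffun q => _] in E1 E2.
have -> : [ffun q => if q \in p :: map fstG L then rho R i f q else g q] = F1.
  apply/ffunP => q; rewrite /F1 !ffunE inE.
  case: (eqVneq q p) => [->|nq] /=; first by rewrite (negbTE pn).
  by [].
by split.
Qed.

Lemma Tog_phi (f : {ffun P -> int}) i : inc_lab R f ->
  Tog (@HGamma _ _ R) i (phi f) = phi (rho R i f) /\ inc_lab R (rho R i f).
Proof.
move=> fi; have /incP[fR _] := fi.
set L := [seq x <- enum G | HGamma x == i].
have hall : all (fun x => HGamma x == i) L by apply: filter_all.
have hu : uniq (map fstG L).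
  rewrite map_inj_in_uniq; first by rewrite filter_uniq // enum_uniq.
  move=> x y; rewrite !mem_filter => /andP[/eqP hx _] /andP[/eqP hy _] e.
  apply: G_inj; rewrite [ssval x]surjective_pairing [ssval y]surjective_pairing.
  by move: hx hy e; rewrite /HGamma /fstG => -> -> ->.
have hA : forall q, f q = f q \/ f q = rho R i f q by move=> q; left.
have hB : forall q, q \in map fstG L -> f q = f q by [].
have [E1 E2] := tog_seq fi hall hu fi hA hB.
have EF : [ffun q => if q \in map fstG L then rho R i f q else f q] = rho R i f.
  apply/ffunP => q; rewrite ffunE; case: ifP => // qn.
  rewrite rho_out //; apply/negP => hm.
  move: qn; have -> // : q \in map fstG L.
  by apply/mapP; exists (mkG hm) => //; rewrite mem_filter mem_enum /HGamma /= eqxx.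
by rewrite EF in E1 E2; split.
Qed.

Lemma foldl_rho (s : seq int) (f : {ffun P -> int}) : inc_lab R f ->
  inc_lab R (foldl (fun g i => rho R i g) f s) /\
  phi (foldl (fun g i => rho R i g) f s) = foldl (fun J i => Tog (@HGamma _ _ R) i J) (phi f) s.
Proof.
elim: s f => [|i s IH] f fi //=.
have [E1 E2] := Tog_phi i fi.
by rewrite E1; apply: IH.
Qed.


Local Notation Hv := [seq (@HGamma _ _ R) x | x <- enum G].

Lemma tog_nil I i : i \notin Hv -> Tog (@HGamma _ _ R) i I = I.
Proof.
move=> hn; rewrite /Tog.
case E: [seq x <- enum G | HGamma x == i] => [|y s] //.
have : y \in [seq x <- enum G | HGamma x == i] by rewrite E mem_head.
rewrite mem_filter => /andP[/eqP hy _].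
by move: hn; rewrite -hy map_f ?mem_enum.
Qed.

Lemma foldl_tog_filter (s : seq int) I :
  foldl (fun J i => Tog (@HGamma _ _ R) i J) I s =
  foldl (fun J i => Tog (@HGamma _ _ R) i J) I [seq i <- s | i \in Hv].
Proof.
elim: s I => [|i s IH] I //=.
case: ifP => hi /=; first exact: IH.
by rewrite tog_nil ?hi.
Qed.

Lemma ge_bigminF (T : eqType) (s : seq T) (F : T -> int) x0 y : y \in s ->
  \big[Num.min/x0]_(x <- s) F x <= F y.
Proof.
elim: s => [|a s IH] //; rewrite big_cons; set m := \big[_/_]_(_ <- s) _ in IH *.
rewrite inE => /orP[/eqP->|h]; first lia.
by have := IH h; lia.
Qed.

Lemma le_bigmaxF (T : eqType) (s : seq T) (F : T -> int) x0 y : y \in s ->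
  F y <= \big[Num.max/x0]_(x <- s) F x.
Proof.
elim: s => [|a s IH] //; rewrite big_cons; set m := \big[_/_]_(_ <- s) _ in IH *.
rewrite inE => /orP[/eqP->|h]; first lia.
by have := IH h; lia.
Qed.

Lemma Hv_range i : i \in Hv -> i \in irange R.
Proof.
move=> /mapP[x _ ->]; have /andP[kR _] := GvalP x.
rewrite /HGamma.
set p := (ssval x).1 in kR *; set k := (ssval x).2 in kR *.
have h1 : lo R <= minR (R p).
  by rewrite /lo; apply: (@ge_bigminF _ _ (fun p => minR (R p))); rewrite mem_index_enum.
have h2 : maxR (R p) <= hi R.
  by rewrite /hi; apply: (@le_bigmaxF _ _ (fun p => maxR (R p))); rewrite mem_index_enum.
have h3 := minR_le kR; have h4 := maxR_ge kR.
apply/mapP; exists (absz (k - lo R)).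
  by rewrite mem_iota /=; lia.
lia.
Qed.

Lemma irange_filter : [seq i <- irange R | i \in Hv] = sort (fun a b : int => a <= b) (undup Hv).
Proof.
apply: (@irr_sorted_eq _ (fun a b : int => a < b)).
- by move=> a b c; apply: lt_trans.
- by move=> a; apply: ltxx.
- apply: sorted_filter; first by move=> a b c; apply: lt_trans.
  rewrite /irange; apply: (@homo_sorted _ _ _ ltn); last exact: iota_ltn_sorted.
  by move=> a b /= h; lia.
- have := lt_sorted_uniq_le (sort (fun a b : int => a <= b) (undup Hv)).
  move=> ->; rewrite sort_uniq undup_uniq /=.
  by apply: sort_sorted => a b; apply: le_total.
- move=> a; rewrite mem_filter mem_sort mem_undup.
  by case: (boolP (a \in Hv)) => //= /Hv_range.
Qed.

End Main.

End Aux.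

Theorem theorem4p31 (d : Order.disp_t) (P : finPOrderType d)
  (R : P -> {fset int}) :
  restriction R -> consistent R ->
  exists phi : {ffun P -> int} -> {set Gamma R},
    [/\ forall f, inc_lab R f -> is_ideal (phi f),
        forall f g, inc_lab R f -> inc_lab R g -> phi f = phi g -> f = g,
        forall I, is_ideal I -> exists2 f, inc_lab R f & phi f = I
      & forall f, inc_lab R f ->
          inc_lab R (IncPro R f) /\
          phi (IncPro R f) = TogPro (@HGamma _ _ R) (phi f)].
Proof.
move=> HR HC.
exists (Aux.phi R); split.
- by move=> f fi; apply/Aux.idealP; apply: Aux.phi_ideal.
- move=> f g fi gi; apply: Aux.phi_inj.
  + by case/Aux.incP: fi.
  + by case/Aux.incP: gi.
- move=> I /Aux.idealP HI; exists (Aux.fI I).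
  + exact: (Aux.fI_inc HR HC HI).
  + exact: (Aux.phi_fI HR HI).
- move=> f fi; have [h1 h2] := Aux.foldl_rho HR HC (irange R) fi; split => //.
  rewrite /IncPro h2 Aux.foldl_tog_filter (Aux.irange_filter R).
  reflexivity.
Qed.
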